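(* Let $D=(E,\mathcal{F})$ be a normal delta-matroid and $A\subseteq E$, with $A^{c}=E\setminus A$. Then $w(D*A)=w(D|_{A})+w(D|_{A^{c}})$.
   Context: A delta-matroid is a set system $(E,\mathcal{F})$, $\mathcal{F}\ne\emptyset$ a family of subsets of finite $E$, satisfying: for all $X,Y\in\mathcal{F}$ and $u\in X\Delta Y$ there is $v\in X\Delta Y$ with $X\Delta\{u,v\}\in\mathcal{F}$. It is normal if $\emptyset\in\mathcal{F}$. Twist: $D*A=(E,\{A\Delta X:X\in\mathcal{F}\})$. Width $w(D)$ = maximum minus minimum cardinality of feasible sets (so a delta-matroid on the empty ground set has width $0$). An element is a coloop if it lies in every feasible set. Deletion: $D\setminus e=(E\setminus e,\mathcal{F}')$ where $\mathcal{F}'=\{F\in\mathcal{F}: e\notin F\}$ if $e$ is not a coloop and $\mathcal{F}'=\{F\setminus e: F\in\mathcal{F}\}$ if $e$ is a coloop; deleting a set of elements one at a time is order-independent. The restriction $D|_{A}$ is the result of deleting all elements of $E\setminus A$. *)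

(* Defs.v *)
From mathcomp Require Import all_boot.
Set Implicit Arguments. Unset Strict Implicit. Unset Printing Implicit Defensive.

Section SetSystems.
Variable T : finType.

Definition setsys := ({set T} * {set {set T}})%type.

Definition symdiff (X Y : {set T}) : {set T} := (X :\: Y) :|: (Y :\: X).

Definition is_setsys (D : setsys) : Prop :=
  forall X, X \in D.2 -> X \subset D.1.

Definition delta_matroid (D : setsys) : Prop :=
  [/\ is_setsys D, D.2 != set0 &
      forall X Y u, X \in D.2 -> Y \in D.2 -> u \in symdiff X Y ->
        exists2 v, v \in symdiff X Y & symdiff X [set u; v] \in D.2].

Definition normal (D : setsys) : Prop := set0 \in D.2.

Definition twist (D : setsys) (A : {set T}) : setsys :=
  (D.1, [set symdiff A X | X in D.2]).

(* maximum and minimum cardinality of feasible sets (for nonempty families);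
   the identity #|T| of minn is never below the cardinality of a subset. *)
Definition maxcard (F : {set {set T}}) : nat := \max_(X in F) #|X|.
Definition mincard (F : {set {set T}}) : nat := \big[minn/#|T|]_(X in F) #|X|.
Definition width (D : setsys) : nat := maxcard D.2 - mincard D.2.

Definition coloop (D : setsys) (e : T) : bool := [forall X in D.2, e \in X].

Definition delete (D : setsys) (e : T) : setsys :=
  (D.1 :\ e,
   if coloop D e then [set X :\ e | X in D.2]
   else [set X in D.2 | e \notin X]).

Definition delete_seq (D : setsys) (s : seq T) : setsys :=
  foldl delete D s.

Definition restrict (D : setsys) (A : {set T}) : setsys :=
  delete_seq D (enum (D.1 :\: A)).

End SetSystems.

(* Main.v *)
Require Import Defs.
From mathcomp Require Import all_boot.
From mathcomp Require Import zify.

Set Implicit Arguments. Unset Strict Implicit. Unset Printing Implicit Defensive.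

Ltac brute SX S u v X B := let x := fresh "x" in apply/setP; intro x;
  move: (subsetP SX x); unfold S; rewrite !inE;
  case: (x == u); case: (x == v); case: (x \in X); case: (x \in B) => /= h;
  (by []) || (by have := h isT).

Section Aux.
Variable T : finType.
Implicit Types (D : setsys T) (E X Y A B : {set T}) (F G : {set {set T}}).

Lemma delete_normal D e : set0 \in D.2 ->
  delete D e = (D.1 :\ e, [set X in D.2 | e \notin X]).
Proof.
move=> h; rewrite /delete; case: ifP => // /forallP /(_ set0).
by rewrite h inE.
Qed.

Lemma delete_seq_fam D s : set0 \in D.2 ->
  (delete_seq D s).2 = [set X in D.2 | all (fun e => e \notin X) s].
Proof.
elim: s D => [|e s IH] D h /=.
  by apply/setP=> X; rewrite inE andbT.
rewrite /delete_seq /= -/(delete_seq _ _) IH; last first.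
  by rewrite delete_normal //= inE h inE.
rewrite delete_normal //=; apply/setP=> X; by rewrite !inE andbA.
Qed.

Lemma all_enum_sub E A X : X \subset E ->
  all (fun e => e \notin X) (enum (E :\: A)) = (X \subset A).
Proof.
move=> XE; apply/allP/subsetP => [h x xX | h x].
  apply/negPn/negP => xA.
  have := h x; rewrite mem_enum !inE xA (subsetP XE x xX) xX.
  by move=> /(_ isT).
rewrite mem_enum !inE => /andP [xA _]; apply/negP => /h; by rewrite (negbTE xA).
Qed.

Lemma restrict_fam E F A : is_setsys (E, F) -> set0 \in F ->
  (restrict (E, F) A).2 = [set X in F | X \subset A].
Proof.
move=> hs h0; rewrite /restrict delete_seq_fam //=.
apply/setP=> X; rewrite !inE; case XF: (X \in F) => //=.
by rewrite all_enum_sub // hs.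
Qed.

Lemma bigmin_le (r : seq {set T}) (P : pred {set T}) n X :
  X \in r -> P X -> \big[minn/n]_(Y <- r | P Y) #|Y| <= #|X|.
Proof.
elim: r => // Y r IH; rewrite inE big_cons => /orP [/eqP <- | Xr] PX.
  by rewrite PX geq_minl.
by case: ifP => _; [rewrite geq_min IH ?orbT | exact: IH].
Qed.

Lemma mincard_eq G m : (exists2 X, X \in G & #|X| = m) ->
  (forall X, X \in G -> m <= #|X|) -> mincard G = m.
Proof.
move=> [X XG <-] hm; apply/eqP; rewrite eqn_leq; apply/andP; split.
  by rewrite /mincard; apply: bigmin_le; rewrite ?mem_index_enum.
rewrite /mincard; elim/big_ind: _ => [|a b ha hb|Y YG];
  [exact: max_card | by rewrite leq_min ha hb | exact: hm].
Qed.

Lemma mincard0 G : set0 \in G -> mincard G = 0.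
Proof. by move=> h; apply: mincard_eq; [exists set0; rewrite ?cards0|]. Qed.

Lemma maxcard_eq G m : (exists2 X, X \in G & #|X| = m) ->
  (forall X, X \in G -> #|X| <= m) -> maxcard G = m.
Proof.
move=> [X XG <-] hm; apply/eqP; rewrite eqn_leq; apply/andP; split.
  by apply/bigmax_leqP.
exact: (leq_bigmax_cond X).
Qed.

Lemma maxcard_wit G : set0 \in G -> exists2 X, X \in G & maxcard G = #|X|.
Proof.
move=> h; rewrite /maxcard (bigmax_eq_arg set0) //.
by case: arg_maxnP => // X XG _; exists X.
Qed.

Lemma maxcard_ub G X : X \in G -> #|X| <= maxcard G.
Proof. by move=> h; exact: (leq_bigmax_cond X). Qed.

Lemma card_symdiff A X : #|symdiff A X| = #|A :\: X| + #|X :\: A|.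
Proof.
rewrite -(cardsID A (symdiff A X)).
have -> : symdiff A X :&: A = A :\: X.
  by apply/setP=> x; rewrite !inE; case: (x \in A); case: (x \in X).
have -> : symdiff A X :\: A = X :\: A.
  by apply/setP=> x; rewrite !inE; case: (x \in A); case: (x \in X).
by [].
Qed.

Lemma exch E F B X : delta_matroid (E, F) -> set0 \in F -> X \in F ->
  exists2 X', X' \in F & X' \subset B /\ #|X :&: B| <= #|X'| + #|X :\: B|.
Proof.
move=> [hs _ hx] h0.
have [n lt] := ubnP #|X :\: B|; elim: n X lt => // n IH X lt XF.
case: (set_0Vmem (X :\: B)) => [e0 | [u uXB]].
  exists X => //; split; first by rewrite -setD_eq0 e0.
  by apply: leq_trans (leq_addr _ _); exact: subset_leq_card (subsetIl _ _).
have uX : u \in X by move: uXB; rewrite inE => /andP [].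
have uB : u \notin B by move: uXB; rewrite inE => /andP [].
have usd : u \in symdiff X set0 by rewrite !inE uX.
have [v vsd vF] := hx X set0 u XF h0 usd.
have vX : v \in X by move: vsd; rewrite !inE => /orP [/andP [] | /andP []].
set S := [set u; v].
set X2 := symdiff X S.
have SX : S \subset X by apply/subsetP=> x; rewrite !inE => /orP [] /eqP ->.
have X2E : X2 = X :\: S.
  apply/setP=> x; move: (subsetP SX x); rewrite /X2 /S !inE.
  by case: (x == u); case: (x == v); case: (x \in X) => /= h;
    (by []) || (by have := h isT).
have c1 : #|X2 :\: B| + #|S :\: B| = #|X :\: B|.
  rewrite -(cardsID S (X :\: B)) addnC.
  have -> : (X :\: B) :&: S = S :\: B by brute SX S u v X B.
  have -> : (X :\: B) :\: S = X2 :\: B by rewrite X2E; brute SX S u v X B.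
  by [].
have c2 : #|X :&: B| <= #|X2 :&: B| + #|S :&: B|.
  have -> : X :&: B = (X2 :&: B) :|: (S :&: B) by rewrite X2E; brute SX S u v X B.
  by rewrite cardsU leq_subr.
have c3 : #|S :&: B| <= #|S :\: B|.
  have h1 := cardsID B S.
  have h2 : #|S| <= 2 by rewrite cards2; case: (_ != _).
  have h3 : 0 < #|S :\: B| by apply/card_gt0P; exists u; rewrite !inE uB eqxx.
  clear -h1 h2 h3; lia.
have lt2 : #|X2 :\: B| < n.
  have : 0 < #|S :\: B| by apply/card_gt0P; exists u; rewrite !inE uB eqxx.
  move=> h; clear -c1 lt h; lia.
have [X' X'F [X'B c4]] := IH X2 lt2 vF.
exists X'; first exact: X'F. split; first exact: X'B. clear -c1 c2 c3 c4; lia.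
Qed.

End Aux.

Theorem mainTheorem7 (T : finType) (E : {set T}) (F : {set {set T}})
    (A : {set T}) :
  delta_matroid (E, F) -> normal (E, F) -> A \subset E ->
  width (twist (E, F) A) =
    width (restrict (E, F) A) + width (restrict (E, F) (E :\: A)).
Proof.
move=> dm h0 AE; have hs : is_setsys (E, F) by case: dm.
rewrite /width !restrict_fam //.
set FA := [set X in F | X \subset A]; set FB := [set X in F | X \subset E :\: A].
rewrite (@mincard0 T FA) ?inE ?h0 ?sub0set // (@mincard0 T FB) ?inE ?h0 ?sub0set //.
have [XA XAin ha] : exists2 X, X \in FA & maxcard FA = #|X|
  by apply: maxcard_wit; rewrite inE h0 sub0set.
have [YB YBin hb] : exists2 X, X \in FB & maxcard FB = #|X|
  by apply: maxcard_wit; rewrite inE h0 sub0set.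
have XAin' := XAin; have YBin' := YBin.
move: XAin' YBin'; rewrite !inE => /andP[XAF XAA] /andP[YBF YBA].
have XAle : #|XA| <= #|A| by apply: subset_leq_card.
rewrite /twist /= (@maxcard_eq T _ ( #|A| + #|YB|)); last first.
  move=> Z /imsetP [X XF ->]; rewrite card_symdiff.
  have [X' X'F [X'B c]] := @exch T E F (~: A) X dm h0 XF.
  have X'FB : X' \in FB.
    rewrite inE X'F setDE subsetI X'B andbT; exact: hs.
  have := maxcard_ub X'FB; rewrite hb => c'.
  move: c; rewrite -setDE [X :\: ~: A]setDE setCK => c.
  have := cardsID X A; rewrite setIC => c2.
  have := cardsID A X; clear -c c2 c'; lia.
  exists (symdiff A YB); first by apply: imset_f.
  have d : [disjoint YB & A] by move: YBA; rewrite subsetD => /andP [].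
  have e1 : #|A :&: YB| = 0.
    by apply/eqP; rewrite cards_eq0 setI_eq0 disjoint_sym.
  have e2 : #|YB :&: A| = 0 by apply/eqP; rewrite cards_eq0 setI_eq0.
  have := cardsID YB A; have := cardsID A YB; rewrite card_symdiff; clear -e1 e2; lia.
rewrite (@mincard_eq T _ ( #|A| - #|XA|)); last first.
  move=> Z /imsetP [X XF ->]; rewrite card_symdiff.
  have [X' X'F [X'B c]] := @exch T E F A X dm h0 XF.
  have X'FA : X' \in FA by rewrite inE X'F X'B.
  have := maxcard_ub X'FA; rewrite ha => c'.
  have := cardsID X A; rewrite setIC => c2.
  have := cardsID A X; clear -c c2 c'; lia.
  exists (symdiff A XA); first by apply: imset_f.
  have e1 : #|XA :\: A| = 0 by apply/eqP; rewrite cards_eq0 setD_eq0.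
  have e2 : #|A :&: XA| = #|XA| by rewrite (setIidPr XAA).
  have := cardsID XA A; have := cardsID A XA; rewrite card_symdiff; clear -e1 e2; lia.
rewrite ha hb; clear -XAle; lia.
Qed.
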